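(* (1) $S^{N-1}_{\mathbb C,\times}$ is left and right half-classical, and it is maximal with this property: every closed subspace $X\subset S^{N-1}_{\mathbb C,+}$ which is both left and right half-classical satisfies $X\subset S^{N-1}_{\mathbb C,\times}$. (2) $S^{N-1}_{\mathbb C,**}$ is fully half-classical. (3) $S^{N-1}_{\mathbb R,*}$ is fully half-classical, and every closed subspace $X\subset S^{N-1}_{\mathbb R,+}$ which is fully half-classical satisfies $X\subset S^{N-1}_{\mathbb R,*}$.
   Context: $C(S^{N-1}_{\mathbb C,+})$ is the universal unital C*-algebra generated by $x_1,\dots,x_N$ with $\sum_ix_ix_i^*=\sum_ix_i^*x_i=1$; $S^{N-1}_{\mathbb R,+}$ adds $x_i=x_i^*$. $S^{N-1}_{\mathbb C,\times}$: impose $ab^*c=cb^*a$ for all $a,b,c\in\{x_i\}$; $S^{N-1}_{\mathbb C,**}$: impose $abc=cba$ for all $a,b,c\in\{x_i,x_i^*\}$; $S^{N-1}_{\mathbb R,*}$: impose on $S^{N-1}_{\mathbb R,+}$ the relations $abc=cba$ for $a,b,c\in\{x_i\}$. Closed subspaces $X\subset S^{N-1}_{\mathbb C,+}$ are quotients $C(X)$ of $C(S^{N-1}_{\mathbb C,+})$. For such $X$: the left projective version $PX$ has $C(PX)$ = C*-subalgebra of $C(X)$ generated by $p_{ij}=x_ix_j^*$; the right projective version $P'X$ is generated by $q_{ij}=x_j^*x_i$; the full projective version $\mathcal PX$ is generated by all $p_{ij},q_{ij}$. $X$ is left/right/fully half-classical when $C(PX)$, $C(P'X)$, $C(\mathcal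 PX)$ respectively is commutative. *)

(* Defs.v *)
From Stdlib Require Import Reals.
Open Scope R_scope.

Definition Cx : Type := (R * R)%type.
Definition Cadd (a b : Cx) : Cx := (fst a + fst b, snd a + snd b).
Definition Cmul (a b : Cx) : Cx :=
  (fst a * fst b - snd a * snd b, fst a * snd b + snd a * fst b).
Definition Cconj (a : Cx) : Cx := (fst a, - snd a).
Definition Cabs (a : Cx) : R := sqrt (fst a * fst a + snd a * snd a).
Definition C1 : Cx := (1, 0).

(* ---------- Unital C*-algebras (possibly the zero algebra) ---------- *)
Record CStarAlg := {
  car :> Type;
  add : car -> car -> car;
  opp : car -> car;
  zero : car;
  mul : car -> car -> car;
  one : car;
  scal : Cx -> car -> car;
  star : car -> car;
  norm : car -> R;
  addA : forall x y z, add x (add y z) = add (add x y) z;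
  addC : forall x y, add x y = add y x;
  add0 : forall x, add zero x = x;
  addN : forall x, add (opp x) x = zero;
  scalA : forall a b x, scal a (scal b x) = scal (Cmul a b) x;
  scal1 : forall x, scal C1 x = x;
  scalDr : forall a x y, scal a (add x y) = add (scal a x) (scal a y);
  scalDl : forall a b x, scal (Cadd a b) x = add (scal a x) (scal b x);
  mulA : forall x y z, mul x (mul y z) = mul (mul x y) z;
  mul1l : forall x, mul one x = x;
  mul1r : forall x, mul x one = x;
  mulDl : forall x y z, mul (add x y) z = add (mul x z) (mul y z);
  mulDr : forall x y z, mul x (add y z) = add (mul x y) (mul x z);
  scal_mull : forall a x y, scal a (mul x y) = mul (scal a x) y;
  scal_mulr : forall a x y, scal a (mul x y) = mul x (scal a y);
  starK : forall x, star (star x) = x;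
  starD : forall x y, star (add x y) = add (star x) (star y);
  starZ : forall a x, star (scal a x) = scal (Cconj a) (star x);
  starM : forall x y, star (mul x y) = mul (star y) (star x);
  norm_ge0 : forall x, 0 <= norm x;
  norm_eq0 : forall x, norm x = 0 -> x = zero;
  norm_triangle : forall x y, norm (add x y) <= norm x + norm y;
  normZ : forall a x, norm (scal a x) = Cabs a * norm x;
  normM : forall x y, norm (mul x y) <= norm x * norm y;
  norm_cstar : forall x, norm (mul (star x) x) = norm x * norm x;
  complete : forall u : nat -> car,
    (forall eps, 0 < eps -> exists M, forall m n, (M <= m)%nat -> (M <= n)%nat ->
        norm (add (u m) (opp (u n))) < eps) ->
    exists l, forall eps, 0 < eps -> exists M, forall n, (M <= n)%nat ->
        norm (add (u n) (opp l)) < eps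
}.

Arguments add {_}. Arguments opp {_}. Arguments zero {_}. Arguments mul {_}.
Arguments one {_}. Arguments scal {_}. Arguments star {_}. Arguments norm {_}.

Fixpoint sumA (A : CStarAlg) (n : nat) (f : nat -> A) : A :=
  match n with
  | O => zero
  | S n' => add (sumA A n' f) (f n')
  end.

Definition converges (A : CStarAlg) (u : nat -> A) (l : A) : Prop :=
  forall eps, 0 < eps -> exists M, forall n, (M <= n)%nat -> norm (add (u n) (opp l)) < eps.

Definition closed_star_subalg (A : CStarAlg) (S : A -> Prop) : Prop :=
  S one /\
  (forall x y, S x -> S y -> S (add x y)) /\
  (forall a x, S x -> S (scal a x)) /\
  (forall x y, S x -> S y -> S (mul x y)) /\
  (forall x, S x -> S (star x)) /\
  (forall u l, (forall n, S (u n)) -> converges A u l -> S l).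

Definition generated (A : CStarAlg) (G : A -> Prop) (a : A) : Prop :=
  forall S, closed_star_subalg A S -> (forall g, G g -> S g) -> S a.

Definition commutative_set (A : CStarAlg) (S : A -> Prop) : Prop :=
  forall a b, S a -> S b -> mul a b = mul b a.

(* ---------- Closed subspaces X of the free complex sphere ----------
   C(X) = a unital C*-algebra A generated by x_0..x_{N-1} satisfying the
   relations of C(S^{N-1}_{C,+}) (i.e. a quotient of C(S^{N-1}_{C,+})). *)
Definition free_complex_sphere (N : nat) (A : CStarAlg) (x : nat -> A) : Prop :=
  sumA A N (fun i => mul (x i) (star (x i))) = one /\
  sumA A N (fun i => mul (star (x i)) (x i)) = one.

Definition generated_by (N : nat) (A : CStarAlg) (x : nat -> A) : Prop :=
  forall a : A, generated A (fun g => exists i, (i < N)%nat /\ g = x i) a.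

Definition closed_subspace (N : nat) (A : CStarAlg) (x : nat -> A) : Prop :=
  free_complex_sphere N A x /\ generated_by N A x.

(* real version: S^{N-1}_{R,+} adds x_i = x_i^* *)
Definition self_adjoint_coords (N : nat) (A : CStarAlg) (x : nat -> A) : Prop :=
  forall i, (i < N)%nat -> star (x i) = x i.

Definition rel_times (N : nat) (A : CStarAlg) (x : nat -> A) : Prop :=
  forall i j k, (i < N)%nat -> (j < N)%nat -> (k < N)%nat ->
    mul (mul (x i) (star (x j))) (x k) = mul (mul (x k) (star (x j))) (x i).

Definition coord_or_adj (N : nat) (A : CStarAlg) (x : nat -> A) (a : A) : Prop :=
  exists i, (i < N)%nat /\ (a = x i \/ a = star (x i)).

Definition rel_starstar (N : nat) (A : CStarAlg) (x : nat -> A) : Prop :=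
  forall a b c, coord_or_adj N A x a -> coord_or_adj N A x b -> coord_or_adj N A x c ->
    mul (mul a b) c = mul (mul c b) a.

(* relations of S_{R,*}: abc = cba, a,b,c in {x_i} *)
Definition rel_half_real (N : nat) (A : CStarAlg) (x : nat -> A) : Prop :=
  forall i j k, (i < N)%nat -> (j < N)%nat -> (k < N)%nat ->
    mul (mul (x i) (x j)) (x k) = mul (mul (x k) (x j)) (x i).

Definition is_p (N : nat) (A : CStarAlg) (x : nat -> A) (a : A) : Prop :=
  exists i j, (i < N)%nat /\ (j < N)%nat /\ a = mul (x i) (star (x j)).
Definition is_q (N : nat) (A : CStarAlg) (x : nat -> A) (a : A) : Prop :=
  exists i j, (i < N)%nat /\ (j < N)%nat /\ a = mul (star (x j)) (x i).

(* C(PX), C(P'X), C(\mathcal P X) commutative *)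
Definition left_half_classical (N : nat) (A : CStarAlg) (x : nat -> A) : Prop :=
  commutative_set A (generated A (is_p N A x)).
Definition right_half_classical (N : nat) (A : CStarAlg) (x : nat -> A) : Prop :=
  commutative_set A (generated A (is_q N A x)).
Definition fully_half_classical (N : nat) (A : CStarAlg) (x : nat -> A) : Prop :=
  commutative_set A (generated A (fun a => is_p N A x a \/ is_q N A x a)).

(* Main.v *)
Require Import Defs.
From Stdlib Require Import Reals Lra Psatz.
Open Scope R_scope.

Lemma addr0' (A:CStarAlg) (x:A) : add x zero = x.
Proof. rewrite addC; apply add0. Qed.
Lemma addNr' (A:CStarAlg) (x:A) : add x (opp x) = zero.
Proof. rewrite addC; apply addN. Qed.
Lemma opp_uniq (A:CStarAlg) (a b:A) : add b a = zero -> b = opp a.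
Proof.
  intro H. rewrite <- (addr0' A b), <- (addNr' A a), addA, H, add0. reflexivity.
Qed.
Lemma sub_eq0 (A:CStarAlg) (a b:A) : add a (opp b) = zero -> a = b.
Proof.
  intro H. rewrite <- (addr0' A a), <- (addN A b), addA, H, add0. reflexivity.
Qed.
Lemma add_idem (A:CStarAlg) (a:A) : add a a = a -> a = zero.
Proof.
  intro H. assert (E: add (opp a) (add a a) = add (opp a) a) by (rewrite H; reflexivity).
  rewrite addA, addN, add0 in E. exact E.
Qed.
Lemma mul0l (A:CStarAlg) (y:A) : mul zero y = zero.
Proof. apply add_idem. rewrite <- mulDl, add0. reflexivity. Qed.
Lemma mul0r (A:CStarAlg) (y:A) : mul y zero = zero.
Proof. apply add_idem. rewrite <- mulDr, add0. reflexivity. Qed.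
Lemma mulNl (A:CStarAlg) (x y:A) : mul (opp x) y = opp (mul x y).
Proof. apply opp_uniq. rewrite <- mulDl, addN, mul0l. reflexivity. Qed.
Lemma mulNr (A:CStarAlg) (x y:A) : mul y (opp x) = opp (mul y x).
Proof. apply opp_uniq. rewrite <- mulDr, addN, mul0r. reflexivity. Qed.
Lemma scal0 (A:CStarAlg) (x:A) : scal (0,0) x = zero.
Proof.
  apply add_idem. rewrite <- scalDl. unfold Cadd; simpl. rewrite Rplus_0_l. reflexivity.
Qed.
Lemma oppE (A:CStarAlg) (x:A) : opp x = scal (-1,0) x.
Proof.
  symmetry; apply opp_uniq. rewrite <- (scal1 A x) at 2. rewrite <- scalDl.
  replace (Cadd (-1,0) Defs.C1) with ((0,0):Cx) by (unfold Cadd, Defs.C1; simpl; f_equal; ring).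
  apply scal0.
Qed.
Lemma norm_opp (A:CStarAlg) (x:A) : norm (opp x) = norm x.
Proof.
  rewrite oppE, normZ. unfold Cabs; simpl.
  replace (-1 * -1 + 0*0) with 1 by ring. rewrite sqrt_1. ring.
Qed.
Lemma opp_sub (A:CStarAlg) (a b:A) : opp (add a (opp b)) = add b (opp a).
Proof.
  symmetry; apply opp_uniq.
  rewrite <- addA, (addA A (opp a) a), addN, add0, addNr'. reflexivity.
Qed.

Lemma limit_comm (A:CStarAlg) (u: nat -> A) (l g:A) :
  (forall n, mul (u n) g = mul g (u n)) -> converges A u l -> mul l g = mul g l.
Proof.
  intros Hu Hc.
  set (d := add (mul l g) (opp (mul g l))).
  assert (Hd: forall n, d = add (mul (add l (opp (u n))) g) (mul g (add (u n) (opp l)))).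
  { intro n. rewrite mulDl, mulDr, mulNl, mulNr, Hu. unfold d.
    rewrite <- addA. rewrite (addA A (opp (mul g (u n))) (mul g (u n))).
    rewrite addN, add0. reflexivity. }
  assert (Hnd: forall n, norm d <= 2 * norm g * norm (add (u n) (opp l))).
  { intro n. rewrite (Hd n). rewrite <- (opp_sub A (u n) l).
    eapply Rle_trans. apply norm_triangle.
    pose proof (normM A (opp (add (u n) (opp l))) g).
    pose proof (normM A g (add (u n) (opp l))).
    rewrite norm_opp in H. lra. }
  assert (Hz: norm d = 0).
  { destruct (Rle_lt_or_eq_dec 0 (norm d) (norm_ge0 A d)) as [Hp|Hp]; [|auto].
    exfalso. pose proof (norm_ge0 A g) as Hg.
    set (e := norm d / (2 * (norm g + 1))).
    assert (He: 2 * (norm g + 1) * e = norm d) by (unfold e; field; lra).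
    assert (He0: 0 < e) by (unfold e; apply Rdiv_lt_0_compat; lra).
    destruct (Hc e He0) as [M HM]. specialize (HM M (le_n M)).
    specialize (Hnd M). nra. }
  apply sub_eq0. apply norm_eq0. exact Hz.
Qed.

Definition Comm (A:CStarAlg) (T : A -> Prop) (b:A) : Prop :=
  forall t, T t -> mul b t = mul t b.

Lemma comm_closed (A:CStarAlg) (T: A->Prop) :
  (forall t, T t -> T (star t)) -> closed_star_subalg A (Comm A T).
Proof.
  intro Hst. unfold closed_star_subalg, Comm. repeat split.
  - intros t _. rewrite mul1l, mul1r; reflexivity.
  - intros x y Hx Hy t Ht. rewrite mulDl, mulDr, (Hx t Ht), (Hy t Ht). reflexivity.
  - intros a x Hx t Ht. rewrite <- scal_mull, (Hx t Ht). apply scal_mulr.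
  - intros x y Hx Hy t Ht. rewrite <- mulA, (Hy t Ht), mulA, (Hx t Ht), mulA. reflexivity.
  - intros x Hx t Ht. transitivity (star (mul (star t) x)).
    + rewrite starM, starK; reflexivity.
    + rewrite <- (Hx (star t) (Hst t Ht)). rewrite starM, starK. reflexivity.
  - intros u l Hu Hc t Ht. apply (limit_comm A u l t); auto.
Qed.

Lemma gen_incl (A:CStarAlg) (G : A -> Prop) a : G a -> generated A G a.
Proof. intros H S _ HG; auto. Qed.

Lemma gen_star (A:CStarAlg) (G : A -> Prop) a : generated A G a -> generated A G (star a).
Proof.
  intros H S HS HG. pose proof HS as HS'. destruct HS' as (_&_&_&_&Hs&_).
  apply Hs, H; auto.
Qed.

Lemma gen_mono (A:CStarAlg) (G G' : A -> Prop) :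
  (forall a, G a -> G' a) -> forall a, generated A G a -> generated A G' a.
Proof. intros H a Ha S HS HG. apply Ha; auto. Qed.

Lemma gen_comm (A:CStarAlg) (G : A -> Prop) :
  (forall g, G g -> G (star g)) -> (forall a b, G a -> G b -> mul a b = mul b a) ->
  commutative_set A (generated A G).
Proof.
  intros Hs Hc.
  assert (H1: forall a, generated A G a -> Comm A G a).
  { intros a Ha. apply Ha. apply comm_closed; auto. intros g Hg t Ht; auto. }
  assert (H2: forall b, generated A G b -> Comm A (generated A G) b).
  { intros b Hb; apply Hb. apply comm_closed. intros; apply gen_star; auto.
    intros g Hg a Ha. symmetry. apply (H1 a Ha g Hg). }
  intros a b Ha Hb. apply (H2 a Ha b Hb).
Qed.

Lemma sum_mull (A:CStarAlg) n f (y:A) :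
  mul (sumA A n f) y = sumA A n (fun i => mul (f i) y).
Proof. induction n; simpl; [apply mul0l | rewrite mulDl, IHn; reflexivity]. Qed.
Lemma sum_mulr (A:CStarAlg) n f (y:A) :
  mul y (sumA A n f) = sumA A n (fun i => mul y (f i)).
Proof. induction n; simpl; [apply mul0r | rewrite mulDr, IHn; reflexivity]. Qed.
Lemma sum_ext (A:CStarAlg) n f g :
  (forall i, (i < n)%nat -> f i = g i) -> sumA A n f = sumA A n g.
Proof.
  induction n; intro H; simpl; [reflexivity|].
  rewrite IHn by (intros; apply H; auto). rewrite H by auto. reflexivity.
Qed.

Lemma swap3 (A:CStarAlg) (a b c r:A) :
  mul a (mul b c) = mul c (mul b a) -> mul a (mul b (mul c r)) = mul c (mul b (mul a r)).
Proof.
  intro H. rewrite (mulA A b c r), (mulA A a (mul b c) r), H, <- !mulA. reflexivity.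
Qed.

Lemma swap4 (A:CStarAlg) (a b c d r:A) :
  mul (mul a b) (mul c d) = mul (mul c d) (mul a b) ->
  mul a (mul b (mul c (mul d r))) = mul c (mul d (mul a (mul b r))).
Proof.
  intro H. transitivity (mul (mul (mul a b) (mul c d)) r).
  - rewrite <- !mulA; reflexivity.
  - rewrite H, <- !mulA; reflexivity.
Qed.

Lemma swap4' (A:CStarAlg) (a b c d:A) :
  mul (mul a b) (mul c d) = mul (mul c d) (mul a b) ->
  mul a (mul b (mul c d)) = mul c (mul d (mul a b)).
Proof. intro H. rewrite <- !mulA in H. exact H. Qed.

Lemma p_gen N (A:CStarAlg) x i j : (i < N)%nat -> (j < N)%nat ->
  generated A (is_p N A x) (mul (x i) (star (x j))).
Proof. intros; apply gen_incl; exists i, j; auto. Qed.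
Lemma q_gen N (A:CStarAlg) x i j : (i < N)%nat -> (j < N)%nat ->
  generated A (is_q N A x) (mul (star (x j)) (x i)).
Proof. intros; apply gen_incl; exists i, j; auto. Qed.

Lemma maximal1 N (A : CStarAlg) (x : nat -> A) :
  closed_subspace N A x ->
  left_half_classical N A x -> right_half_classical N A x -> rel_times N A x.
Proof.
  intros [[S1 S2] _] LH RH i j k Hi Hj Hk.
  assert (E: forall l, (l<N)%nat ->
    mul (mul (x l) (star (x l))) (mul (mul (x i) (star (x j))) (x k)) =
    mul (mul (x k) (mul (star (x l)) (x l))) (mul (star (x j)) (x i))).
  { intros l Hl. rewrite <- !mulA.
    rewrite (swap4' A (star (x l)) (x i) (star (x j)) (x k))
      by (apply RH; apply q_gen; auto).
    rewrite (swap4 A (x l) (star (x j)) (x k) (star (x l)) (x i))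
      by (apply LH; apply p_gen; auto).
    reflexivity. }
  transitivity (mul one (mul (mul (x i) (star (x j))) (x k))).
  { rewrite mul1l; reflexivity. }
  rewrite <- S1, sum_mull.
  transitivity (sumA A N (fun l => mul (mul (x k) (mul (star (x l)) (x l))) (mul (star (x j)) (x i)))).
  { apply sum_ext. intros l Hl. apply E; auto. }
  rewrite <- (sum_mull A N (fun l => mul (x k) (mul (star (x l)) (x l)))).
  rewrite <- (sum_mulr A N (fun l => mul (star (x l)) (x l)) (x k)).
  rewrite S2, mul1r, mulA. reflexivity.
Qed.

Lemma part1a N (A : CStarAlg) (x : nat -> A) :
  closed_subspace N A x -> rel_times N A x ->
  left_half_classical N A x /\ right_half_classical N A x.
Proof.
  intros _ Hrel.
  assert (Hr: forall i j k, (i<N)%nat -> (j<N)%nat -> (k<N)%nat ->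
     mul (x i) (mul (star (x j)) (x k)) = mul (x k) (mul (star (x j)) (x i))).
  { intros i j k Hi Hj Hk. pose proof (Hrel i j k Hi Hj Hk) as H.
    rewrite <- !mulA in H. exact H. }
  assert (Hs: forall i j k, (i<N)%nat -> (j<N)%nat -> (k<N)%nat ->
     mul (star (x k)) (mul (x j) (star (x i))) = mul (star (x i)) (mul (x j) (star (x k)))).
  { intros i j k Hi Hj Hk. pose proof (Hrel i j k Hi Hj Hk) as H.
    apply (f_equal star) in H. rewrite !starM, !starK in H. exact H. }
  split; apply gen_comm.
  - intros g [i [j [Hi [Hj ->]]]]. exists j, i. rewrite starM, starK. auto.
  - intros a b [i [j [Hi [Hj ->]]]] [k [l [Hk [Hl ->]]]].
    rewrite <- !mulA.
    rewrite (swap3 A (x i) (star (x j)) (x k) (star (x l))) by (apply Hr; auto).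
    rewrite (Hs l i j) by auto. reflexivity.
  - intros g [i [j [Hi [Hj ->]]]]. exists j, i. rewrite starM, starK. auto.
  - intros a b [i [j [Hi [Hj ->]]]] [k [l [Hk [Hl ->]]]].
    rewrite <- !mulA.
    rewrite (Hr i l k) by auto.
    rewrite (swap3 A (star (x j)) (x k) (star (x l)) (x i)) by (apply Hs; auto).
    reflexivity.
Qed.

Lemma part2 N (A : CStarAlg) (x : nat -> A) :
  rel_starstar N A x -> fully_half_classical N A x.
Proof.
  intros Hrel.
  assert (Hn: forall a b c, coord_or_adj N A x a -> coord_or_adj N A x b ->
     coord_or_adj N A x c -> mul a (mul b c) = mul c (mul b a)).
  { intros a b c Ha Hb Hc. pose proof (Hrel a b c Ha Hb Hc) as H.
    rewrite <- !mulA in H. exact H. }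
  assert (Hq: forall a b c d, coord_or_adj N A x a -> coord_or_adj N A x b ->
     coord_or_adj N A x c -> coord_or_adj N A x d ->
     mul (mul a b) (mul c d) = mul (mul c d) (mul a b)).
  { intros a b c d Ha Hb Hc Hd. rewrite <- !mulA.
    rewrite (swap3 A a b c d (Hn a b c Ha Hb Hc)). rewrite (Hn b a d Hb Ha Hd).
    reflexivity. }
  assert (Hd: forall g, is_p N A x g \/ is_q N A x g ->
     exists u v, coord_or_adj N A x u /\ coord_or_adj N A x v /\ g = mul u v).
  { intros g [[i [j [Hi [Hj ->]]]]|[i [j [Hi [Hj ->]]]]].
    - exists (x i), (star (x j)). split; [exists i; auto|split; [exists j; auto|reflexivity]].
    - exists (star (x j)), (x i). split; [exists j; auto|split; [exists i; auto|reflexivity]]. }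
  apply gen_comm.
  - intros g [[i [j [Hi [Hj ->]]]]|[i [j [Hi [Hj ->]]]]].
    + left. exists j, i. rewrite starM, starK. auto.
    + right. exists j, i. rewrite starM, starK. auto.
  - intros a b Ha Hb. destruct (Hd a Ha) as [u [v [Hu [Hv ->]]]].
    destruct (Hd b Hb) as [u' [v' [Hu' [Hv' ->]]]]. apply Hq; auto.
Qed.

Theorem proposition3p5 (N : nat) :
  (* (1) S_{C,x} is left and right half-classical ... *)
  ((forall (A : CStarAlg) (x : nat -> A),
      closed_subspace N A x -> rel_times N A x ->
      left_half_classical N A x /\ right_half_classical N A x) /\
   (* ... and maximal with this property *)
   (forall (A : CStarAlg) (x : nat -> A),
      closed_subspace N A x ->
      left_half_classical N A x -> right_half_classical N A x ->
      rel_times N A x)) /\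
  (* (2) S_{C,**} is fully half-classical *)
  (forall (A : CStarAlg) (x : nat -> A),
      closed_subspace N A x -> rel_starstar N A x ->
      fully_half_classical N A x) /\
  (* (3) S_{R,*} is fully half-classical, and maximal among X in S_{R,+} *)
  ((forall (A : CStarAlg) (x : nat -> A),
      closed_subspace N A x -> self_adjoint_coords N A x -> rel_half_real N A x ->
      fully_half_classical N A x) /\
   (forall (A : CStarAlg) (x : nat -> A),
      closed_subspace N A x -> self_adjoint_coords N A x ->
      fully_half_classical N A x ->
      rel_half_real N A x)).
Proof.
  split; [split; [apply part1a | apply maximal1]|].
  split; [intros; apply part2; auto|].
  split.
  - intros A x _ SA Hr. apply part2.
    assert (Hc: forall a, coord_or_adj N A x a -> exists i, (i<N)%nat /\ a = x i).
    { intros a [i [Hi [->| ->]]]; exists i; split; auto. }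
    intros a b c Ha Hb Hc'. destruct (Hc a Ha) as [i [Hi ->]].
    destruct (Hc b Hb) as [j [Hj ->]]. destruct (Hc c Hc') as [k [Hk ->]].
    apply Hr; auto.
  - intros A x Hsub SA Hf i j k Hi Hj Hk.
    assert (Ht: rel_times N A x).
    { apply maximal1; auto.
      - intros a b Ha Hb. apply Hf; apply (gen_mono A (is_p N A x)); [intros; left; auto | auto | auto | auto].
      - intros a b Ha Hb. apply Hf; apply (gen_mono A (is_q N A x)); [intros; right; auto | auto | auto | auto]. }
    pose proof (Ht i j k Hi Hj Hk) as H. rewrite !SA in H by auto. exact H.
Qed.
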